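(* Let $\alpha,\beta\in\mathbb{Z}[\rho]$ be nonzero with $N(\alpha)\ge 7$. Then $EJ_{\alpha\beta}$ is an $N(\beta)$-fold cover of $EJ_\alpha$.
   Context: $\rho=(1+\sqrt{-3})/2$, $\mathbb{Z}[\rho]=\{x+y\rho: x,y\in\mathbb{Z}\}$ with norm $N(x+y\rho)=x^2+xy+y^2$ (multiplicative). For $N(\gamma)\ge 7$, $EJ_\gamma$ is the Cayley graph on the additive group of $\mathbb{Z}[\rho]/(\gamma)$ with connection set $\{\pm[1]_\gamma,\pm[\rho]_\gamma,\pm[\rho^2]_\gamma\}$, where $[\xi]_\gamma$ is the residue class modulo $(\gamma)$. A graph $\Gamma_1$ is a cover of $\Gamma_2$ if there is a surjection $\phi:V(\Gamma_1)\to V(\Gamma_2)$ whose restriction to the neighbourhood of each $u\in V(\Gamma_1)$ is a bijection onto the neighbourhood of $\phi(u)$; it is a $k$-fold cover if moreover $|\phi^{-1}(v)|=k$ for all $v$. *)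

(* Defs.v *)
(* Eisenstein integers Z[rho], rho = (1 + sqrt(-3))/2, rho^2 = rho - 1. *)
From Stdlib Require Import ZArith List.
Open Scope Z_scope.

(* x + y*rho *)
Record EI := mkEI { re : Z; im : Z }.

Definition ei_zero : EI := mkEI 0 0.
Definition ei_one : EI := mkEI 1 0.
Definition ei_rho : EI := mkEI 0 1.
Definition ei_add (a b : EI) : EI := mkEI (re a + re b) (im a + im b).
Definition ei_opp (a : EI) : EI := mkEI (- re a) (- im a).
Definition ei_sub (a b : EI) : EI := ei_add a (ei_opp b).
(* (a + b rho)(c + d rho) = (ac - bd) + (ad + bc + bd) rho, using rho^2 = rho - 1 *)
Definition ei_mul (a b : EI) : EI :=
  mkEI (re a * re b - im a * im b)
       (re a * im b + im a * re b + im a * im b).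
Definition ei_norm (a : EI) : Z := re a * re a + re a * im a + im a * im a.
Definition ei_rho2 : EI := ei_mul ei_rho ei_rho.

Definition ei_cong (g x y : EI) : Prop := exists d, ei_sub x y = ei_mul g d.

(* residue classes modulo (g): the vertex set Z[rho]/(g) *)
Record EJV (g : EI) := mkEJV {
  cls : EI -> Prop;
  cls_ok : exists x, forall y, cls y <-> ei_cong g y x }.
Arguments cls {g} _ _.

Definition ei_conn (c : EI) : Prop :=
  c = ei_one \/ c = ei_opp ei_one \/ c = ei_rho \/ c = ei_opp ei_rho
  \/ c = ei_rho2 \/ c = ei_opp ei_rho2.

Definition EJ_adj (g : EI) (u v : EJV g) : Prop :=
  exists x y c, cls u x /\ cls v y /\ ei_conn c /\ ei_cong g (ei_sub y x) c.

Definition is_cover {V1 V2 : Type} (adj1 : V1 -> V1 -> Prop) (adj2 : V2 -> V2 -> Prop)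
  (phi : V1 -> V2) : Prop :=
  (forall v, exists u, phi u = v) /\
  (forall u,
     (forall w, adj1 u w -> adj2 (phi u) (phi w)) /\
     (forall v, adj2 (phi u) v -> exists! w, adj1 u w /\ phi w = v)).

Definition is_kfold_cover {V1 V2 : Type} (adj1 : V1 -> V1 -> Prop) (adj2 : V2 -> V2 -> Prop)
  (phi : V1 -> V2) (k : nat) : Prop :=
  is_cover adj1 adj2 phi /\
  (forall v, exists l : list V1,
     NoDup l /\ length l = k /\ (forall u, In u l <-> phi u = v)).

(* Main.v *)
Require Import Defs.
From Stdlib Require Import ZArith List Lia FinFun.
From Stdlib Require Import FunctionalExtensionality PropExtensionality ProofIrrelevance.
Open Scope Z_scope.

Ltac eisimpl := unfold ei_sub, ei_add, ei_opp, ei_mul, ei_norm, ei_zero, ei_one, ei_rho, ei_rho2 in *; simpl in *.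
Ltac eiring := intros; repeat match goal with e : EI |- _ => destruct e end; eisimpl; f_equal; ring.

Lemma mul_assoc' a b c : ei_mul (ei_mul a b) c = ei_mul a (ei_mul b c). Proof. eiring. Qed.
Lemma norm_mul a b : ei_norm (ei_mul a b) = ei_norm a * ei_norm b.
Proof. destruct a, b; eisimpl; ring. Qed.
Lemma norm_nonneg a : 0 <= ei_norm a.
Proof. destruct a as [x y]; eisimpl; nia. Qed.
Lemma norm_zero a : ei_norm a = 0 -> a = ei_zero.
Proof. destruct a as [x y]; eisimpl; intros; f_equal; nia. Qed.

Lemma cong_refl g x : ei_cong g x x.
Proof. exists ei_zero. eiring. Qed.
Lemma cong_sym g x y : ei_cong g x y -> ei_cong g y x.
Proof. intros [d H]; exists (ei_opp d). destruct g, x, y, d; eisimpl.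
  injection H; intros; f_equal; nia. Qed.
Lemma cong_trans g x y z : ei_cong g x y -> ei_cong g y z -> ei_cong g x z.
Proof. intros [d H] [e H']; exists (ei_add d e). destruct g, x, y, z, d, e; eisimpl.
  injection H; injection H'; intros; f_equal; nia. Qed.
Lemma cong_weak a b x y : ei_cong (ei_mul a b) x y -> ei_cong a x y.
Proof. intros [d H]; exists (ei_mul b d); rewrite H; apply mul_assoc'. Qed.
Lemma cong_sub_add g x y c : ei_cong g (ei_sub y x) c <-> ei_cong g y (ei_add x c).
Proof. assert (E: ei_sub (ei_sub y x) c = ei_sub y (ei_add x c)) by eiring.
  unfold ei_cong; rewrite E; tauto. Qed.
Lemma cong_add_cancel g x a b : ei_cong g (ei_add x a) (ei_add x b) -> ei_cong g a b.
Proof. assert (E: ei_sub (ei_add x a) (ei_add x b) = ei_sub a b) by eiring.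
  unfold ei_cong; rewrite E; tauto. Qed.

Lemma conn_unique al c c' : 7 <= ei_norm al -> ei_conn c -> ei_conn c' -> ei_cong al c c' -> c = c'.
Proof.
  intros Hn Hc Hc' [d H].
  assert (HN := f_equal ei_norm H). rewrite norm_mul in HN.
  pose proof (norm_nonneg d).
  remember (ei_norm al) as Na; remember (ei_norm d) as Nd. clear HeqNa HeqNd H.
  unfold ei_conn in *;
  repeat match goal with h : _ \/ _ |- _ => destruct h end; subst; try reflexivity;
  match type of HN with ?l = _ => let v := eval vm_compute in l in change l with v in HN end;
  destruct (Z.eq_dec Nd 0); subst; nia.
Qed.

Lemma cancel al e : 7 <= ei_norm al -> ei_mul al e = ei_zero -> e = ei_zero.
Proof. intros Hn H. apply norm_zero. assert (HN := f_equal ei_norm H).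
  rewrite norm_mul in HN. pose proof (norm_nonneg e). change (ei_norm ei_zero) with 0 in HN. nia. Qed.

Lemma EJV_ext g (u v : EJV g) : (forall y, cls u y <-> cls v y) -> u = v.
Proof.
  destruct u as [cu pu], v as [cv pv]; simpl; intros H.
  assert (cu = cv) by (apply functional_extensionality; intro; apply propositional_extensionality; auto).
  subst. f_equal. apply proof_irrelevance.
Qed.

Definition cl g x : EJV g := mkEJV g (fun y => ei_cong g y x) (ex_intro _ x (fun y => iff_refl _)).

Lemma EJV_rep g (u : EJV g) : exists x, u = cl g x.
Proof. destruct (cls_ok g u) as [x Hx]. exists x. apply EJV_ext. simpl. exact Hx. Qed.

Lemma cl_eq g x y : cl g x = cl g y -> ei_cong g x y.
Proof. intros H. assert (H' : cls (cl g x) x) by apply cong_refl. rewrite H in H'. exact H'. Qed.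
Lemma cl_eq' g x y : ei_cong g x y -> cl g x = cl g y.
Proof. intros H. apply EJV_ext; simpl; split; intros.
  eapply cong_trans; eauto. eapply cong_trans; eauto using cong_sym. Qed.

Lemma adj_cl g x y : EJ_adj g (cl g x) (cl g y) <-> exists c, ei_conn c /\ ei_cong g (ei_sub y x) c.
Proof.
  split.
  - intros (x' & y' & c & Hx & Hy & Hc & H). simpl in *. exists c. split; auto.
    apply cong_sub_add in H. apply cong_sub_add.
    destruct Hx as [d1 E1]. destruct Hy as [d2 E2]. destruct H as [d3 E3].
    exists (ei_add (ei_sub d3 d2) d1). destruct g, x, y, x', y', c, d1, d2, d3; eisimpl.
    injection E1; injection E2; injection E3; intros; f_equal; nia.
  - intros (c & Hc & H). exists x, y, c. simpl. repeat split; auto using cong_refl.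
Qed.

Definition zr (n : Z) : list Z := map Z.of_nat (seq 0 (Z.to_nat n)).
Lemma zr_in n z : In z (zr n) <-> 0 <= z < n.
Proof. unfold zr. rewrite in_map_iff. split.
  - intros [k [<- Hk]]. apply in_seq in Hk. lia.
  - intros H. exists (Z.to_nat z). rewrite in_seq. split; lia. Qed.
Lemma zr_nodup n : NoDup (zr n).
Proof. unfold zr. apply FinFun.Injective_map_NoDup. intros x y; lia. apply seq_NoDup. Qed.
Lemma zr_len n : length (zr n) = Z.to_nat n.
Proof. unfold zr. rewrite length_map, length_seq. reflexivity. Qed.

Lemma NoDup_prod {A B} (l1 : list A) (l2 : list B) : NoDup l1 -> NoDup l2 -> NoDup (list_prod l1 l2).
Proof.
  induction 1 as [|a l1 Ha Hl1 IH]; intros H2; simpl. constructor.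
  apply NoDup_app. apply FinFun.Injective_map_NoDup. intros x y E; injection E; auto. auto. auto.
  intros [x y] H1 H3. apply in_map_iff in H1. destruct H1 as [z [E _]]. injection E; intros; subst.
  apply in_prod_iff in H3. tauto.
Qed.

Section Res.
Variable be : EI.
Definition ga := Z.gcd (re be) (im be).
Definition n1 := ei_norm be / ga.
Definition R : list EI := map (fun p => mkEI (fst p) (snd p)) (list_prod (zr n1) (zr ga)).

Lemma R_in t : In t R <-> 0 <= re t < n1 /\ 0 <= im t < ga.
Proof. unfold R. rewrite in_map_iff. split.
  - intros [[x y] [<- H]]. apply in_prod_iff in H. rewrite !zr_in in H. simpl. tauto.
  - intros H. exists (re t, im t). rewrite in_prod_iff, !zr_in. destruct t; simpl in *. tauto. Qed.

Lemma R_nodup : NoDup R.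
Proof. unfold R. apply FinFun.Injective_map_NoDup.
  intros [x y] [x' y'] E; simpl in E; injection E; intros; subst; auto.
  apply NoDup_prod; apply zr_nodup. Qed.

Hypothesis Hbe : be <> ei_zero.

Lemma ga_pos : 0 < ga.
Proof. unfold ga. pose proof (Z.gcd_nonneg (re be) (im be)).
  destruct (Z.eq_dec (Z.gcd (re be) (im be)) 0) as [E|E]; [|lia].
  apply Z.gcd_eq_0 in E. destruct be; simpl in *; destruct E; subst; exfalso; apply Hbe; reflexivity. Qed.

Lemma decomp : exists a' b', re be = ga * a' /\ im be = ga * b' /\ n1 = ga * (a'*a' + a'*b' + b'*b').
Proof.
  destruct (Z.gcd_divide_l (re be) (im be)) as [a' Ha].
  destruct (Z.gcd_divide_r (re be) (im be)) as [b' Hb].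
  fold ga in Ha, Hb. exists a', b'. repeat split; try lia.
  unfold n1, ei_norm. rewrite Ha, Hb.
  replace (a' * ga * (a' * ga) + a' * ga * (b' * ga) + b' * ga * (b' * ga))
    with (ga * (a' * a' + a' * b' + b' * b') * ga) by ring.
  rewrite Z.div_mul. ring. pose proof ga_pos; lia. Qed.

Lemma n1_pos : 0 < n1.
Proof. destruct decomp as (a' & b' & Ha & Hb & Hn). pose proof ga_pos.
  assert (0 < ei_norm be).
  { pose proof (norm_nonneg be). destruct (Z.eq_dec (ei_norm be) 0) as [E|E]; [|lia].
    apply norm_zero in E. contradiction. }
  unfold ei_norm in H0. rewrite Ha, Hb in H0. rewrite Hn. nia. Qed.

Lemma R_len : length R = Z.to_nat (ei_norm be).
Proof. unfold R. rewrite length_map, length_prod, !zr_len.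
  destruct decomp as (a' & b' & Ha & Hb & Hn). pose proof ga_pos. pose proof n1_pos.
  rewrite <- Z2Nat.inj_mul by lia. f_equal. unfold ei_norm. rewrite Ha, Hb, Hn. ring. Qed.

Lemma R_complete s : exists t, In t R /\ ei_cong be s t.
Proof.
  destruct (Z.gcd_bezout (re be) (im be) ga eq_refl) as (u & v & Huv).
  destruct decomp as (a' & b' & Ha & Hb & Hn). pose proof ga_pos as Hg. pose proof n1_pos as Hn1.
  set (e := re be * (v - u) - im be * u).
  set (q := im s / ga). set (j := im s mod ga).
  set (p := (re s - q * e) / n1). set (i := (re s - q * e) mod n1).
  exists (mkEI i j). split.
  - apply R_in. simpl. split; apply Z.mod_pos_bound; lia.
  - exists (mkEI (q * (v - u) + p * (a' + b')) (q * u - p * b')).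
    assert (E1 : im s = ga * q + j) by (apply Z.div_mod; lia).
    assert (E2 : re s - q * e = n1 * p + i) by (apply Z.div_mod; lia).
    destruct s as [x y], be as [a b]; simpl in *. subst e.
    unfold ei_sub, ei_add, ei_opp, ei_mul; simpl. f_equal.
    + assert (Ex : x = n1 * p + i + q * (a * (v - u) - b * u)) by lia.
      rewrite Ex, Hn, Ha, Hb. ring.
    + assert (Ey : y = ga * q + j) by lia. rewrite Ey.
      rewrite <- Huv at 1. rewrite Ha, Hb. ring.
Qed.

Lemma R_distinct t t' : In t R -> In t' R -> ei_cong be t t' -> t = t'.
Proof.
  rewrite !R_in. intros [Hi Hj] [Hi' Hj'] [d E].
  destruct (Z.gcd_bezout (re be) (im be) ga eq_refl) as (u & v & Huv).
  destruct decomp as (a' & b' & Ha & Hb & Hn). pose proof ga_pos as Hg. pose proof n1_pos as Hn1.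
  destruct t as [i j], t' as [i' j'], be as [a b], d as [d1 d2]; simpl in *.
  unfold ei_sub, ei_add, ei_opp, ei_mul in E; simpl in E. injection E; intros E2 E1.
  assert (Hjj : j = j').
  { rewrite Ha, Hb in E2.
    assert (j - j' = ga * (a' * d2 + b' * d1 + b' * d2)) by (rewrite Z.mul_add_distr_l, Z.mul_add_distr_l; nia).
    assert (-1 < a' * d2 + b' * d1 + b' * d2 < 1) by nia. nia. }
  subst j'.
  set (X := i - i') in *.
  assert (E2' : a*d2 + b*d1 + b*d2 = 0) by lia.
  assert (E1' : X = a*d1 - b*d2) by (subst X; lia).
  assert (F1 : X * (a + b) = (a*a + a*b + b*b) * d1).
  { assert (X * (a + b) - (a*a + a*b + b*b) * d1 = -b * (a*d2 + b*d1 + b*d2)) by (rewrite E1'; ring).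
    rewrite E2' in H. lia. }
  assert (F2 : X * b = - (a*a + a*b + b*b) * d2).
  { assert (X * b + (a*a + a*b + b*b) * d2 = a * (a*d2 + b*d1 + b*d2)) by (rewrite E1'; ring).
    rewrite E2' in H. lia. }
  assert (F3 : X * ga = (a*a + a*b + b*b) * (u * (d1 + d2) - v * d2)).
  { rewrite <- Huv.
    assert (X * (u * a + v * b) = u * (X * (a+b)) + (v - u) * (X * b)) by ring.
    rewrite H, F1, F2. ring. }
  assert (F4 : a*a + a*b + b*b = n1 * ga).
  { rewrite Hn, Ha, Hb. ring. }
  rewrite F4 in F3.
  set (K := u * (d1 + d2) - v * d2) in *.
  assert (F5 : X = n1 * K).
  { apply (Z.mul_reg_r _ _ ga); [lia|]. rewrite F3. ring. }
  assert (HK : K = 0).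
  { destruct (Z.lt_trichotomy K 0) as [HK|[HK|HK]]; auto.
    - assert (n1 * K <= n1 * (-1)) by (apply Z.mul_le_mono_nonneg_l; lia). subst X. lia.
    - assert (n1 * 1 <= n1 * K) by (apply Z.mul_le_mono_nonneg_l; lia). subst X. lia. }
  assert (X = 0) by (rewrite F5, HK; ring).
  f_equal. lia.
Qed.
End Res.

Lemma phi_ok al be (u : EJV (ei_mul al be)) :
  exists x0, forall y, (exists x, cls u x /\ ei_cong al y x) <-> ei_cong al y x0.
Proof.
  destruct (cls_ok _ u) as [x0 Hx0]. exists x0. intro y. split.
  - intros [x [Hx Hy]]. apply Hx0 in Hx. eapply cong_trans; eauto using cong_weak.
  - intros H. exists x0. split; auto. apply Hx0, cong_refl.
Qed.

Definition phi al be (u : EJV (ei_mul al be)) : EJV al :=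
  mkEJV al (fun y => exists x, cls u x /\ ei_cong al y x) (phi_ok al be u).

Lemma phi_cl al be x : phi al be (cl (ei_mul al be) x) = cl al x.
Proof. apply EJV_ext; simpl. intro y; split.
  - intros [x' [H1 H2]]. eapply cong_trans; eauto using cong_weak.
  - intros H. exists x. split; auto using cong_refl. Qed.

Theorem theorem4p1 (alpha beta : EI) :
  alpha <> ei_zero -> beta <> ei_zero -> 7 <= ei_norm alpha ->
  exists phi : EJV (ei_mul alpha beta) -> EJV alpha,
    is_kfold_cover (EJ_adj (ei_mul alpha beta)) (EJ_adj alpha) phi
      (Z.to_nat (ei_norm beta)).
Proof.
  intros Ha Hb Hn. exists (phi alpha beta). split; [split|].
  - intros v. destruct (EJV_rep _ v) as [z ->]. exists (cl _ z). apply phi_cl.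
  - intros u. destruct (EJV_rep _ u) as [x ->]. split.
    + intros w. destruct (EJV_rep _ w) as [y ->]. rewrite !phi_cl, !adj_cl.
      intros [c [Hc H]]. exists c. split; auto. eapply cong_weak; eauto.
    + intros v. destruct (EJV_rep _ v) as [y ->]. rewrite phi_cl, adj_cl.
      intros [c [Hc H]]. apply cong_sub_add in H.
      exists (cl _ (ei_add x c)). split; [split|].
      * apply adj_cl. exists c. split; auto. apply cong_sub_add, cong_refl.
      * rewrite phi_cl. apply cl_eq'. apply cong_sym; auto.
      * intros w [Hw Hpw]. destruct (EJV_rep _ w) as [y' ->].
        rewrite phi_cl in Hpw. apply cl_eq in Hpw.
        apply adj_cl in Hw. destruct Hw as [c' [Hc' H']].
        apply cong_sub_add in H'.
        assert (c' = c).
        { apply (conn_unique alpha); auto. apply (cong_add_cancel _ x).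
          eapply cong_trans. apply cong_sym. eapply cong_weak; eauto.
          eapply cong_trans; eauto. }
        subst c'. symmetry. apply cl_eq'. auto.
  - intros v. destruct (EJV_rep _ v) as [z ->].
    exists (map (fun t => cl (ei_mul alpha beta) (ei_add z (ei_mul alpha t))) (R beta)).
    split; [|split].
    + apply NoDup_map_NoDup_ForallPairs; [|apply R_nodup].
      intros t t' Ht Ht' E. apply cl_eq in E. apply (R_distinct beta); auto.
      destruct E as [d E]. exists d.
      assert (Z0 : ei_sub (ei_sub t t') (ei_mul beta d) = ei_zero).
      { apply (cancel alpha); auto.
      assert (ei_mul alpha (ei_sub (ei_sub t t') (ei_mul beta d)) =
              ei_sub (ei_sub (ei_add z (ei_mul alpha t)) (ei_add z (ei_mul alpha t')))
                     (ei_mul (ei_mul alpha beta) d)) by eiring.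
      rewrite H, E. eiring. }
      assert (ei_sub t t' = ei_add (ei_sub (ei_sub t t') (ei_mul beta d)) (ei_mul beta d)) by eiring.
      rewrite H, Z0. eiring.
    + rewrite length_map. apply R_len; auto.
    + intros u. rewrite in_map_iff. split.
      * intros [t [<- _]]. rewrite phi_cl. apply cl_eq'.
        exists t. eiring.
      * destruct (EJV_rep _ u) as [y ->]. rewrite phi_cl. intros E. apply cl_eq in E.
        destruct E as [s Es].
        destruct (R_complete beta Hb s) as [t [Ht [d Ed]]].
        exists t. split; auto. apply cl_eq'. exists (ei_opp d).
        assert (y = ei_add z (ei_mul alpha s)).
        { assert (y = ei_add z (ei_sub y z)) by eiring. rewrite H, Es. reflexivity. }
        assert (s = ei_add t (ei_mul beta d)).
        { assert (s = ei_add t (ei_sub s t)) by eiring. rewrite H0, Ed. reflexivity. }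
        subst y s. eiring.
Qed.
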